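(* In $U(gl(m|n+1))$, each $\tau_k$ ($k\ge0$) can be expressed as a polynomial in the Casimir elements $I_j$ and $\hat I_j$ with $j\le k$, and each $\sigma_\ell$ ($\ell\ge0$) can be expressed as a polynomial in the Casimir elements $I_j$ and $\hat I_j$ with $j\le\ell+2$.
   Context: Over $\mathbb{C}$, $N=m+n+1$, parity $(p)=0$ for $1\le p\le m$, $(p)=1$ for $m<p\le N$. $gl(m|n+1)$ has homogeneous basis $E_{pq}$ ($1\le p,q\le N$) of parity $(p)+(q)$ with graded bracket $[E_{pq},E_{rs}]=\delta_{qr}E_{ps}-(-1)^{((p)+(q))((r)+(s))}\delta_{ps}E_{rq}$; $gl(m|n)$ is the subalgebra spanned by $E_{pq}$ with $p,q\le m+n$. Let $\mathcal B^p_{\ q}=(-1)^{(p)}E_{pq}$ ($1\le p,q\le N$) and let $\mathcal A$ be its upper-left $(m+n)\times(m+n)$ submatrix, $\mathcal A^p_{\ q}=(-1)^{(p)}E_{pq}$ ($1\le p,q\le m+n$). Powers: $(X^k)^p_{\ q}=\sum_rX^p_{\ r}(X^{k-1})^r_{\ q}$ (sum over the index range of $X$), $X^0$ the identity. Define $\tau_k=(\mathcal B^k)^N_{\ N}$, $\sigma_\ell=\sum_{p,q=1}^{m+n}\mathcal B^N_{\ p}(\mathcal A^\ell)^p_{\ q}\mathcal B^q_{\ N}$, and the Casimir elements $\hat I_k=\sum_{p=1}^N(-1)^{(p)}(\mathcal B^k)^p_{\ p}$ of $gl(m|n+1)$ and $I_k=\sum_{p=1}^{m+n}(-1)^{(p)}(\mathcal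 A^k)^p_{\ p}$ of $gl(m|n)$. Polynomials have complex coefficients (which may depend on $m,n$). *)

(* Defs.v *)
From HB Require Import structures.
From mathcomp Require Import all_boot all_order all_algebra.
From mathcomp Require Import Rstruct.
From mathcomp Require Import complex.
From mathcomp Require Import mpoly.
Set Implicit Arguments. Unset Strict Implicit. Unset Printing Implicit Defensive.
Import Order.TTheory GRing.Theory Num.Theory.
Local Open Scope ring_scope.

Definition Cplx : fieldType := complex Rdefinitions.R.

(* Parity of a (0-based) index p of 'I_N: even for p < m, odd for p >= m.
   (0-based p corresponds to the 1-based index p+1 of the paper.) *)
Definition par (m : nat) {N : nat} (p : 'I_N) : nat := (m <= p)%N.

Section GL.
Variables (m n : nat) (A : algType Cplx).
Local Notation N := (m + n).+1.

(* e p q plays the role of the image of E_{pq} in an associative C-algebra A;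
   gl_rel says that e satisfies the defining relations of U(gl(m|n+1)):
   E_pq E_rs - (-1)^{((p)+(q))((r)+(s))} E_rs E_pq = [E_pq, E_rs]. *)
Definition gl_rel (e : 'I_N -> 'I_N -> A) : Prop :=
  forall p q r s : 'I_N,
    let sg : A := (-1) ^+ ((par m p + par m q) * (par m r + par m s)) in
    e p q * e r s - sg * (e r s * e p q)
    = (q == r)%:R * e p s - sg * ((p == s)%:R * e r q).

Definition mxpow {K : nat} (X : 'M[A]_K) (k : nat) : 'M[A]_K :=
  iter k (mulmx X) 1%:M.

Variable e : 'I_N -> 'I_N -> A.

Definition Bmat : 'M[A]_N := \matrix_(p, q) ((-1) ^+ par m p * e p q).

Definition widenN (p : 'I_(m + n)) : 'I_N := widen_ord (leqnSn _) p.

Definition Amat : 'M[A]_(m + n) := \matrix_(p, q) Bmat (widenN p) (widenN q).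

Definition tau (k : nat) : A := mxpow Bmat k ord_max ord_max.

Definition sigma (l : nat) : A :=
  \sum_(p < m + n) \sum_(q < m + n)
     Bmat ord_max (widenN p) * mxpow Amat l p q * Bmat (widenN q) ord_max.

(* Casimirs of gl(m|n+1) and gl(m|n) *)
Definition Ihat (k : nat) : A :=
  \sum_(p < N) (-1) ^+ par m p * mxpow Bmat k p p.
Definition Icas (k : nat) : A :=
  \sum_(p < m + n) (-1) ^+ par m p * mxpow Amat k p p.

Definition casvars (K : nat) (i : 'I_(K + K)) : A :=
  match split i with inl j => Icas j | inr j => Ihat j end.
End GL.

(* Evaluation of a commutative polynomial P in K variables at x : 'I_K -> A
   (A possibly noncommutative; used only at pairwise commuting values):
   sum over monomials of coefficient *: x_0^{a_0} ... x_{K-1}^{a_{K-1}} *)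
Definition mpeval (A : algType Cplx) (K : nat) (P : {mpoly Cplx[K]})
    (x : 'I_K -> A) : A :=
  \sum_(mo <- msupp P) P@_mo *: \prod_(i < K) x i ^+ mo i.

(* Main.v *)
Require Import Defs.
From HB Require Import structures.
From mathcomp Require Import all_boot all_order all_algebra.
From mathcomp Require Import Rstruct complex mpoly.
From mathcomp Require Import ring zify.
From mathcomp Require Import bigenough.
Import BigEnough.
Set Implicit Arguments. Unset Strict Implicit. Unset Printing Implicit Defensive.
Import Order.TTheory GRing.Theory Num.Theory.
Local Open Scope ring_scope.

Notation sg b := ((-1) ^+ (nat_of_bool b) : Cplx).

Lemma sg_addb a b : sg (a (+) b) = sg a * sg b.
Proof. by rewrite signr_addb. Qed.

Section TL.
Variables (A : algType Cplx) (K : nat) (pi : 'I_K -> bool).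

Definition sig (p q r s : 'I_K) := (pi p (+) pi q) && (pi r (+) pi s).

Definition TLr (X : 'M[A]_K) (Z : A) (p q : 'I_K) :=
  forall r s, Z * X r s = sg (sig p q r s) *: (X r s * Z)
     + ((q == r)%:R * sg (pi r)) *: X p s
     - ((p == s)%:R * sg (sig p q r s (+) pi p)) *: X r q.

Lemma sum_delta (T : 'I_K -> A) (c : 'I_K -> Cplx) (a : 'I_K) :
  \sum_t ((a == t)%:R * c t) *: T t = c a *: T a.
Proof.
rewrite (bigD1 a) //= eqxx mul1r big1 ?addr0 // => t /negbTE.
by rewrite eq_sym => ->; rewrite mul0r scale0r.
Qed.

Lemma TLr_1 Z p q : TLr 1%:M Z p q.
Proof.
move=> r s; rewrite !mxE.
case: (eqVneq r s) => [<-|nrs].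
  rewrite /sig addbb andbF /= expr0 scale1r mulr1n mul1r mulr1.
  case: (eqVneq q r) => [?|nqr]; case: (eqVneq p r) => [?|npr]; subst;
    rewrite ?mul1r ?mul0r ?scale0r ?subr0 ?addr0 ?mxE ?eqxx ?mulr1n ?scaler0 ?addr0 ?subr0 //=.
  by rewrite addrK.
rewrite (_ : false%:R = 0 :> A) // mulr0 mul0r scaler0 add0r.
case: (eqVneq q r) => [?|nqr]; case: (eqVneq p s) => [?|nps]; subst;
  rewrite ?mul1r ?mul0r ?scale0r ?subr0 ?sub0r ?oppr0 ?eqxx ?mulr1n ?scaler0 ?oppr0 //=.
have -> : sig s r r s (+) pi s = pi r by rewrite /sig; case: (pi s); case: (pi r).
by rewrite subrr.
Qed.

Lemma TLr_mul X Y Z p q : TLr X Z p q -> TLr Y Z p q -> TLr (X *m Y) Z p q.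
Proof.
move=> HX HY r s.
have E : forall t, Z * (X r t * Y t s) =
   (sg (sig p q r s) *: (X r t * Y t s * Z))
 + ((q == t)%:R * (sg (sig p q r t) * sg (pi t))) *: (X r t * Y p s)
 - ((p == s)%:R * sg (sig p q r s (+) pi p)) *: (X r t * Y t q)
 + ((q == r)%:R * sg (pi r)) *: (X p t * Y t s)
 - ((p == t)%:R * sg (sig p q r t (+) pi p)) *: (X r q * Y t s).
  move=> t; rewrite mulrA HX !mulrDl !mulNr -!scalerAl -!mulrA HY.
  rewrite !mulrDr !mulrN -!scalerAr !scalerDr !scalerN !scalerA !mulrA.
  congr (_ *: _ + _ *: _ - _ *: _ + _ - _).
  - by rewrite -sg_addb /sig; case: (pi p); case: (pi q); case: (pi r); case: (pi t); case: (pi s).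
  - by rewrite [_ * (q == t)%:R]mulrC.
  - rewrite mulrAC -sg_addb mulrC; congr (_ * (_ ^+ nat_of_bool _)).
    by rewrite /sig; case: (pi p); case: (pi q); case: (pi r); case: (pi t); case: (pi s).
rewrite !mxE mulr_sumr (eq_bigr _ (fun t _ => E t)) !big_split /= !sumrN /=.
rewrite -!scaler_sumr -mulr_suml.
have -> : \sum_i ((q == i)%:R * (sg (sig p q r i) * sg (pi i))) *: (X r i * Y p s)
   = (sg (sig p q r q) * sg (pi q)) *: (X r q * Y p s) by rewrite sum_delta.
have -> : \sum_i ((p == i)%:R * sg (sig p q r i (+) pi p)) *: (X r q * Y i s)
   = sg (sig p q r p (+) pi p) *: (X r q * Y p s).
  by rewrite (sum_delta (fun i => X r q * Y i s)).
have -> : sg (sig p q r q) * sg (pi q) = sg (sig p q r p (+) pi p).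
  by rewrite -sg_addb /sig; case: (pi p); case: (pi q); case: (pi r).
by rewrite addrAC [_ + _ - _]addrAC addrK addrAC.
Qed.

Lemma TLr_pow X Z p q : TLr X Z p q -> forall k, TLr (mxpow X k) Z p q.
Proof. by move=> HX; elim=> [|k IH] /=; [exact: TLr_1|exact: TLr_mul]. Qed.

End TL.

Lemma signM_scale (A : algType Cplx) (k : nat) (x : A) :
  (-1) ^+ k * x = ((-1) ^+ k : Cplx) *: x.
Proof.
rewrite -signr_odd -[in RHS]signr_odd; case: (odd k).
  by rewrite expr1 mulN1r scaleN1r.
by rewrite expr0 mul1r scale1r.
Qed.

Lemma sign_alg (A : algType Cplx) (k : nat) :
  (-1) ^+ k = (((-1) ^+ k : Cplx)%:A : A).
Proof. by rewrite -[LHS]mulr1 signM_scale. Qed.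

Lemma mxpowS' (A : algType Cplx) K (X : 'M[A]_K) k :
  mxpow X k.+1 = mxpow X k *m X.
Proof.
elim: k => [|k IH] /=; first by rewrite mul1mx mulmx1.
by rewrite -mulmxA -IH.
Qed.

Lemma TLr_str (A : algType Cplx) K (pi : 'I_K -> bool) (X : 'M[A]_K) Z p q :
  TLr pi X Z p q ->
  Z * (\sum_t sg (pi t) *: X t t) = (\sum_t sg (pi t) *: X t t) * Z.
Proof.
move=> HX; rewrite mulr_sumr mulr_suml.
under eq_bigr => t _ do rewrite -scalerAr HX.
rewrite (eq_bigr (fun t => sg (pi t) *: (X t t * Z)
   + ((q == t)%:R * (sg (pi t) * sg (pi t))) *: X p t
   - ((p == t)%:R * (sg (pi t) * sg (sig pi p q t t (+) pi p))) *: X t q)); last first.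
  move=> t _; rewrite /sig addbb andbF expr0 scale1r !scalerDr scalerN !scalerA.
  by congr (_ + _ *: _ - _ *: _); rewrite mulrCA.
rewrite !big_split /= sumrN sum_delta (sum_delta (fun t => X t q)).
rewrite /sig addbb andbF /= -!sg_addb !addbb /= expr0 scale1r.
under [in RHS]eq_bigr => t _ do rewrite -scalerAl.
by rewrite addrK.
Qed.

Lemma comm_pow (A : algType Cplx) K (X : 'M[A]_K) (x : A) :
  (forall i j, x * X i j = X i j * x) -> forall k i j, x * mxpow X k i j = mxpow X k i j * x.
Proof.
move=> H; elim=> [|k IH] i j /=; rewrite !mxE.
  by case: (i == j); rewrite ?mulr1n ?mulr0n ?mulr1 ?mul1r ?mulr0 ?mul0r.
rewrite mulr_sumr mulr_suml; apply: eq_bigr => t _.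
by rewrite mulrA H -!mulrA IH.
Qed.

Lemma mulmx_E (A : algType Cplx) K (X Y : 'M[A]_K) i j :
  (X *m Y) i j = \sum_k X i k * Y k j.
Proof. by rewrite mxE. Qed.

Lemma zF (V : zmodType) (S t x y : V) : S = t + (- (- (S - t) + x) + y) + x - y.
Proof.
rewrite opprD opprK [t + _]addrC [S - t - x + y + t]addrAC [S - t - x + t]addrAC.
by rewrite subrK [S - x + y + x]addrAC subrK addrK.
Qed.

Lemma zG (V : zmodType) (X Y t : V) : X + Y - t - X + t = Y.
Proof. by rewrite [X + Y - t - X]addrAC subrK [X + Y]addrC addrK. Qed.

Lemma zR (V : zmodType) (u x I C t : V) : (u + x - I) + (I - C + t) = u + (t + x) - C.
Proof. by rewrite addrA [_ + (I - C)]addrA subrK addrAC -[u + x + t]addrA [x + t]addrC. Qed.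

Lemma comm_sumZ (A : algType Cplx) (I : finType) (x : A) (c : I -> Cplx) (f : I -> A) :
  (forall t, x * f t = f t * x) -> x * (\sum_t c t *: f t) = (\sum_t c t *: f t) * x.
Proof.
move=> H; rewrite mulr_sumr mulr_suml; apply: eq_bigr => t _.
by rewrite -scalerAr H scalerAl.
Qed.

Lemma zS (V : zmodType) (x y z w : V) : x + y - z - w = x - w + y - z.
Proof. by rewrite addrAC [x + y - w]addrAC. Qed.
Lemma zT (V : zmodType) (t S D : V) : D + t = S -> t = S - D.
Proof. by move=> <-; rewrite addrC addKr. Qed.
Lemma zQ (V : zmodType) (X H u t v I : V) : X + H = u - t + v - I -> H = u + v - I - X - t.
Proof.
move=> E; have -> : H = X + H - X by rewrite addrC addKr.
rewrite E [u - t + v]addrAC [u + v - t - I]addrAC.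
by rewrite [u + v - I - t - X]addrAC.
Qed.

Lemma zU (V : zmodType) (t s u v D : V) : t = s + (u - v) - D -> t + v = s + u - D.
Proof. by move=> ->; rewrite addrAC addrA subrK. Qed.

Lemma zW (V : zmodType) (x y z : V) : z = x + (y + z) - x - y.
Proof. by rewrite [x + _]addrC addrK addrC addKr. Qed.

Section Gl.
Variables (m n : nat) (A : algType Cplx).
Variable (e : 'I_(m + n).+1 -> 'I_(m + n).+1 -> A).
Hypothesis He : gl_rel e.
Local Notation N := (m + n).+1.
Definition pim (p : 'I_N) : bool := (m <= p)%N.
Local Notation B := (Bmat e).
Local Notation NN := (@ord_max (m + n)).

Lemma Bmat_E p q : B p q = sg (pim p) *: e p q.
Proof. by rewrite mxE signM_scale. Qed.

Lemma natM_scale (k : nat) (x : A) : (k%:R : A) * x = (k%:R : Cplx) *: x.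
Proof. by rewrite mulr_natl scaler_nat. Qed.

Lemma TL_B p q : TLr pim B (B p q) p q.
Proof.
move=> r s; rewrite !Bmat_E -scalerAl -scalerAr -scalerAl -scalerAr !scalerA.
have R := He p q r s; rewrite /= sign_alg !mulr_algl !natM_scale in R.
have e1 : ((-1) ^+ ((par m p + par m q) * (par m r + par m s)) : Cplx) = sg (sig pim p q r s).
  by rewrite -signr_odd oddM !oddD /par !oddb.
rewrite e1 in R; move/eqP: R; rewrite subr_eq => /eqP ->.
rewrite !scalerDr !scalerN !scalerA sg_addb [LHS]addrC addrA.
by congr (_ *: _ + _ *: _ - _ *: _); ring.
Qed.

Lemma TL_Bpow k p q : TLr pim (mxpow B k) (B p q) p q.
Proof. exact/TLr_pow/TL_B. Qed.

Definition Bp : 'M[A]_N := \matrix_(i, j) if i == NN then 0 else B i j.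

Lemma Bp_E i j : Bp i j = if i == NN then 0 else B i j.
Proof. by rewrite mxE. Qed.

Lemma TL_Bp p q : p != NN -> q != NN -> TLr pim Bp (B p q) p q.
Proof.
move=> hp hq r s; rewrite !Bp_E (negbTE hp).
case: (eqVneq r NN) => [->|hr].
  by rewrite mulr0 mul0r scaler0 add0r (negbTE hq) mul0r scale0r scaler0 subr0.
by rewrite TL_B.
Qed.

Lemma TL_Bppow k p q : p != NN -> q != NN -> TLr pim (mxpow Bp k) (B p q) p q.
Proof. by move=> hp hq; apply/TLr_pow/TL_Bp. Qed.


Lemma widen_neq (p : 'I_(m + n)) : widenN p != NN.
Proof. by rewrite -val_eqE /= ltn_eqF. Qed.

Lemma widen_eq (p q : 'I_(m + n)) : (widenN p == widenN q) = (p == q).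
Proof. by rewrite -!val_eqE. Qed.

Lemma pimN : pim NN = true.
Proof. by rewrite /pim /= leq_addr. Qed.

Lemma sumN (F : 'I_N -> A) : \sum_t F t = \sum_(p < m + n) F (widenN p) + F NN.
Proof. by rewrite big_ord_recr. Qed.

Lemma Amat_E p q : Amat e p q = B (widenN p) (widenN q).
Proof. by rewrite mxE. Qed.

Lemma BpN0 k j : j != NN -> mxpow Bp k NN j = 0.
Proof.
case: k => [|k] hj /=; rewrite mxE; first by rewrite eq_sym (negbTE hj).
by rewrite big1 // => t _; rewrite Bp_E eqxx mul0r.
Qed.

Lemma BpNS k j : mxpow Bp k.+1 NN j = 0.
Proof. by rewrite /= mxE big1 // => t _; rewrite Bp_E eqxx mul0r. Qed.

Lemma BpA k p q : mxpow Bp k (widenN p) (widenN q) = mxpow (Amat e) k p q.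
Proof.
elim: k p q => [|k IH] p q /=; rewrite !mxE; first by rewrite widen_eq.
rewrite sumN BpN0 ?widen_neq // mulr0 addr0; apply: eq_bigr => r _.
by rewrite IH Bp_E (negbTE (widen_neq p)) Amat_E.
Qed.

Definition ab a p := mxpow Bp a.+1 (widenN p) NN.

Lemma ab_E a p : ab a p = \sum_q mxpow (Amat e) a p q * B (widenN q) NN.
Proof.
rewrite /ab mxpowS' mxE sumN Bp_E eqxx mulr0 addr0; apply: eq_bigr => q _.
by rewrite BpA Bp_E (negbTE (widen_neq q)).
Qed.

Lemma ab_S a p : ab a.+1 p = \sum_q Amat e p q * ab a q.
Proof.
rewrite /ab [mxpow Bp a.+2]/= mxE sumN BpNS mulr0 addr0; apply: eq_bigr => q _.
by rewrite Bp_E (negbTE (widen_neq p)) Amat_E.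
Qed.

Lemma ab_0 p : ab 0 p = B (widenN p) NN.
Proof. by rewrite /ab /= mulmx1 Bp_E (negbTE (widen_neq p)). Qed.

Definition cc p := B NN (widenN p).
Definition ww i p := mxpow B i NN (widenN p).
Definition vv k p := mxpow B k (widenN p) NN.
Local Notation tauN := (tau e).

Lemma Ev k p : vv k p = \sum_(a < k) ab a p * tauN (k.-1 - a).
Proof.
elim: k p => [|k IH] p.
  by rewrite /vv /= mxE (negbTE (widen_neq p)) big_ord0.
rewrite /vv [mxpow B k.+1]/= mxE sumN big_ord_recl /= subn0 ab_0 addrC.
rewrite -[mxpow B k NN NN]/(tauN k); apply: (congr2 +%R) => //.
under eq_bigr => q _ do rewrite -/(vv k q) IH mulr_sumr.
rewrite exchange_big /=; apply: eq_bigr => a _.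
rewrite ab_S mulr_suml subnS; apply: eq_bigr => q _.
by rewrite Amat_E mulrA -!subn1 subnAC.
Qed.


Lemma sgK b : sg b * sg b = 1.
Proof. by rewrite -sg_addb addbb. Qed.

Lemma Ew i p : ww i.+1 p = \sum_q ww i q * Amat e q p + tauN i * cc p.
Proof.
rewrite /ww mxpowS' mxE sumN; congr (_ + _); apply: eq_bigr => q _.
by rewrite Amat_E.
Qed.

Lemma tau1 : tauN 1 = B NN NN.
Proof. by rewrite /tau /= mulmx1. Qed.

Lemma Ec p k : cc p * tauN k = tauN k * cc p + ww k p.
Proof.
rewrite /cc /tau TL_Bpow (negbTE (widen_neq p)) mul0r scale0r addr0 eqxx mul1r.
rewrite /sig pimN addbb andbF /= expr0 scale1r -/(ww k p).
by rewrite expr1 scaleN1r opprK.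
Qed.

Lemma EYZ i p q : ww i q * Amat e q p =
  sg (sig pim (widenN q) (widenN p) NN (widenN q)) *: (Amat e q p * ww i q)
  + sg (pim (widenN q)) *: ww i p.
Proof.
have H := TL_Bpow i (widenN q) (widenN p) NN (widenN q).
rewrite (negbTE (widen_neq p)) mul0r scale0r addr0 eqxx mul1r in H.
rewrite !Amat_E /ww H scalerBr !scalerA sgK scale1r sg_addb mulrA sgK mul1r.
by rewrite subrK.
Qed.

Lemma EXZ a p q : ab a p * Amat e q p =
  sg (sig pim (widenN q) (widenN p) (widenN p) NN) *:
    (Amat e q p * ab a p - sg (pim (widenN p)) *: ab a q).
Proof.
have H := TL_Bppow a.+1 (widen_neq q) (widen_neq p) (widenN p) NN.
rewrite eqxx mul1r (negbTE (widen_neq q)) mul0r scale0r subr0 in H.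
by rewrite !Amat_E /ab H addrK scalerA sgK scale1r.
Qed.

Definition Kf a i := \sum_p sg (pim (widenN p)) *: (ab a p * ww i p).
Definition Hh a := \sum_p sg (pim (widenN p)) *: (ab a p * cc p).
Definition eps' : Cplx := \sum_(q < m + n) sg (pim (widenN q)).

Lemma EK a i : Kf a i.+1 = Kf a.+1 i + Hh a * tauN i - Kf a i.
Proof.
rewrite {1}/Kf.
under eq_bigr => p _ do rewrite Ew mulrDr scalerDr.
rewrite big_split /= -addrA; congr (_ + _).
  transitivity (\sum_p \sum_q (sg (pim (widenN q)) *: (Amat e q p * ab a p * ww i q)
      - (sg (pim (widenN p)) * sg (pim (widenN q))) *: (ab a q * ww i q)
      + (sg (pim (widenN p)) * sg (pim (widenN q))) *: (ab a p * ww i p))).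
    apply: eq_bigr => p _; rewrite mulr_sumr scaler_sumr; apply: eq_bigr => q _.
    rewrite EYZ mulrDr -scalerAr mulrA EXZ.
    rewrite -!scalerAl mulrBl -scalerAl -scalerAr !scalerDr ?scalerN !scalerA.
    congr (_ *: _ - _ *: _ + _ *: _).
    - rewrite -!sg_addb; congr (sg _).
      by rewrite /sig pimN; case: (pim (widenN p)); case: (pim (widenN q)).
    - rewrite -!sg_addb; congr (sg _).
      by rewrite /sig pimN; case: (pim (widenN p)); case: (pim (widenN q)).
  under eq_bigr => p _ do rewrite !big_split /= sumrN.
  rewrite !big_split /= sumrN.
  have -> : \sum_p \sum_q (sg (pim (widenN p)) * sg (pim (widenN q))) *: (ab a p * ww i p)
       = eps' *: Kf a i.
    rewrite /Kf scaler_sumr; apply: eq_bigr => p _.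
    by rewrite /eps' scaler_suml; apply: eq_bigr => q _; rewrite scalerA mulrC.
  have -> : \sum_p \sum_q (sg (pim (widenN p)) * sg (pim (widenN q))) *: (ab a q * ww i q)
       = eps' *: Kf a i.
    rewrite /Kf /eps' scaler_suml; apply: eq_bigr => p _.
    by rewrite scaler_sumr; apply: eq_bigr => q _; rewrite scalerA.
  rewrite subrK exchange_big /= /Kf; apply: eq_bigr => q _.
  by rewrite -scaler_sumr ab_S -!mulr_suml.
have Ec' : forall p, tauN i * cc p = cc p * tauN i - ww i p by move=> p; rewrite Ec addrK.
under eq_bigr => p _ do rewrite Ec' mulrBr mulrA scalerBr.
rewrite sumrB /Hh mulr_suml; congr (_ - _); apply: eq_bigr => p _.
by rewrite scalerAl.
Qed.


Definition eps : Cplx := \sum_(t < N) sg (pim t).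

Lemma Ihat_E k : Ihat e k = \sum_t sg (pim t) *: mxpow B k t t.
Proof. by apply: eq_bigr => t _; rewrite signM_scale. Qed.

Lemma Icas_E k : Icas e k = \sum_p sg (pim (widenN p)) *: mxpow (Amat e) k p p.
Proof. by apply: eq_bigr => t _; rewrite signM_scale. Qed.

Lemma Estar k : \sum_p sg (pim (widenN p)) *: (vv k p * cc p)
   = tauN k * tauN 1 - tauN k.+1 + eps *: tauN k - Ihat e k.
Proof.
have H t : B NN t * mxpow B k t NN = - (sg (pim t) *: (mxpow B k t NN * B NN t))
     + sg (pim t) *: tauN k - sg (pim t) *: mxpow B k t t.
  rewrite TL_Bpow !eqxx !mul1r -[- (_ *: (mxpow B k t NN * B NN t))]scaleNr.
  congr (_ *: _ + _ *: _ - _ *: _).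
    by rewrite /sig pimN; case: (pim t); rewrite /= ?expr0 ?expr1 ?opprK.
  by rewrite /sig pimN; case: (pim t).
have Ht : tauN k.+1 = - (\sum_t sg (pim t) *: (mxpow B k t NN * B NN t))
     + eps *: tauN k - Ihat e k.
  rewrite /tau [mxpow B k.+1]/= mxE (eq_bigr _ (fun t _ => H t)) !big_split /=.
  by rewrite !sumrN -scaler_suml Ihat_E.
rewrite Ht sumN pimN /= expr1 scaleN1r -tau1 opprD opprK.
exact: zF.
Qed.


Lemma EW k p q : mxpow B k (widenN p) (widenN q)
   = mxpow (Amat e) k p q + \sum_(a < k) ab a p * ww (k.-1 - a) q.
Proof.
elim: k p q => [|k IH] p q.
  by rewrite /= !mxE widen_eq big_ord0 addr0.
rewrite [mxpow B k.+1]/= mulmx_E sumN [mxpow (Amat e) k.+1]/= mulmx_E big_ord_recl /= subn0.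
under eq_bigr => r _ do rewrite IH mulrDr.
rewrite big_split /= -addrA; congr (_ + _).
  by apply: eq_bigr => r _; rewrite Amat_E.
rewrite addrC; congr (_ + _); first by rewrite ab_0.
under eq_bigr => r _ do rewrite mulr_sumr.
rewrite exchange_big /=; apply: eq_bigr => a _.
rewrite ab_S mulr_suml; apply: eq_bigr => r _.
by rewrite Amat_E mulrA /bump leq0n add1n subnS -!subn1 subnAC.
Qed.

Lemma EDelta k : Ihat e k - Icas e k + tauN k = \sum_(a < k) Kf a (k.-1 - a).
Proof.
rewrite Ihat_E sumN pimN /= expr1 scaleN1r Icas_E.
under eq_bigr => p _ do rewrite EW scalerDr.
rewrite big_split /= zG /Kf.
under eq_bigr => p _ do rewrite scaler_sumr.
by rewrite exchange_big.
Qed.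

Lemma HK a j : \sum_p sg (pim (widenN p)) *: (ab a p * (tauN j * cc p)) = Hh a * tauN j - Kf a j.
Proof.
have Ec' : forall p, tauN j * cc p = cc p * tauN j - ww j p by move=> p; rewrite Ec addrK.
under eq_bigr => p _ do rewrite Ec' mulrBr mulrA scalerBr.
rewrite sumrB /Hh mulr_suml; congr (_ - _); apply: eq_bigr => p _.
by rewrite scalerAl.
Qed.

Lemma R1 k : \sum_(a < k) Hh a * tauN (k.-1 - a)
   = tauN k * tauN 1 - tauN k.+1 + (1 + eps) *: tauN k - Icas e k.
Proof.
have E1 : \sum_p sg (pim (widenN p)) *: (vv k p * cc p)
     = \sum_(a < k) Hh a * tauN (k.-1 - a) - \sum_(a < k) Kf a (k.-1 - a).
  rewrite -sumrB.
  under eq_bigr => p _ do rewrite Ev mulr_suml scaler_sumr.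
  rewrite exchange_big /=; apply: eq_bigr => a _.
  by rewrite -HK; apply: eq_bigr => p _; rewrite mulrA.
have := Estar k; rewrite E1 -EDelta => /eqP; rewrite subr_eq => /eqP ->.
by rewrite scalerDl scale1r zR.
Qed.


Lemma sigma_E a : sigma e a = \sum_p cc p * ab a p.
Proof.
apply: eq_bigr => p _; rewrite ab_E mulr_sumr; apply: eq_bigr => q _.
by rewrite mulrA.
Qed.

Lemma Esig k : tauN k.+1 = tauN 1 * tauN k + \sum_(a < k) sigma e a * tauN (k.-1 - a).
Proof.
rewrite {1}/tau [mxpow B k.+1]/= mulmx_E sumN addrC tau1; congr (_ + _).
under eq_bigr => p _ do rewrite -/(vv k p) Ev mulr_sumr.
rewrite exchange_big /=; apply: eq_bigr => a _.
by rewrite sigma_E mulr_suml; apply: eq_bigr => p _; rewrite mulrA.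
Qed.


Lemma Ihat_commB k p q : B p q * Ihat e k = Ihat e k * B p q.
Proof. by rewrite Ihat_E; apply: (TLr_str (TL_Bpow k p q)). Qed.

Lemma Ihat_commBpow k j p q : Ihat e k * mxpow B j p q = mxpow B j p q * Ihat e k.
Proof. by apply: comm_pow => i l; rewrite Ihat_commB. Qed.

Lemma Ihat_commApow k j p q : Ihat e k * mxpow (Amat e) j p q = mxpow (Amat e) j p q * Ihat e k.
Proof. by apply: comm_pow => i l; rewrite Amat_E Ihat_commB. Qed.

Lemma Ihat_Ihat k j : Ihat e k * Ihat e j = Ihat e j * Ihat e k.
Proof. by rewrite [Ihat e j]Ihat_E; apply: comm_sumZ => t; apply: Ihat_commBpow. Qed.

Lemma Ihat_Icas k j : Ihat e k * Icas e j = Icas e j * Ihat e k.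
Proof. by rewrite Icas_E; apply: comm_sumZ => t; apply: Ihat_commApow. Qed.

Lemma BpNN_comm k (x : A) : x * mxpow Bp k NN NN = mxpow Bp k NN NN * x.
Proof.
case: k => [|k]; last by rewrite BpNS mulr0 mul0r.
by rewrite /= mxE eqxx mulr1n mulr1 mul1r.
Qed.

Lemma Icas_commA k p q : Amat e p q * Icas e k = Icas e k * Amat e p q.
Proof.
have S := TLr_str (TL_Bppow k (widen_neq p) (widen_neq q)).
have E : \sum_t sg (pim t) *: mxpow Bp k t t = Icas e k - mxpow Bp k NN NN.
  rewrite Icas_E sumN pimN /= expr1 scaleN1r; congr (_ - _).
  by apply: eq_bigr => t _; rewrite BpA.
rewrite E in S; rewrite Amat_E; move: S; rewrite mulrBr mulrBl BpNN_comm => /eqP.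
by rewrite -subr_eq0 opprB addrA subrK subr_eq0 => /eqP.
Qed.

Lemma Icas_commApow k j p q : Icas e k * mxpow (Amat e) j p q = mxpow (Amat e) j p q * Icas e k.
Proof. by apply: comm_pow => i l; rewrite Icas_commA. Qed.

Lemma Icas_Icas k j : Icas e k * Icas e j = Icas e j * Icas e k.
Proof. by rewrite [Icas e j]Icas_E; apply: comm_sumZ => t; apply: Icas_commApow. Qed.

Lemma casvars_comm K (i j : 'I_(K + K)) :
  casvars e i * casvars e j = casvars e j * casvars e i.
Proof.
rewrite /casvars; case: (split i) => a; case: (split j) => b.
- exact: Icas_Icas.
- by rewrite Ihat_Icas.
- exact: Ihat_Icas.
- exact: Ihat_Ihat.
Qed.

End Gl.

Section MP.
Variables (A : algType Cplx) (K : nat) (h : 'I_K -> A).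
Hypothesis hc : forall i j, h i * h j = h j * h i.

Lemma mpeval_mmap P : mpeval P h = mmap (in_alg A) h P.
Proof. by apply: eq_bigr => mo _; rewrite mulr_algl. Qed.

Lemma comm_pows (a b : nat) i j : GRing.comm (h i ^+ a) (h j ^+ b).
Proof. by apply/commrX/commr_sym/commrX; rewrite /GRing.comm hc. Qed.

Lemma prod_mul_comm (I : Type) (r : seq I) (a b : I -> A) :
  (forall i j, GRing.comm (a i) (b j)) ->
  \prod_(i <- r) (a i * b i) = \prod_(i <- r) a i * \prod_(i <- r) b i.
Proof.
move=> H; elim: r => [|x r IH]; first by rewrite !big_nil mulr1.
rewrite !big_cons IH -!mulrA; congr (_ * _); rewrite !mulrA; congr (_ * _).
by apply: commr_prod => j _; apply/commr_sym/H.
Qed.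

Lemma mmap1_M' m1 m2 : mmap1 h (m1 + m2)%MM = mmap1 h m1 * mmap1 h m2.
Proof.
rewrite /mmap1; under eq_bigr => i _ do rewrite mnmDE exprD.
by apply: prod_mul_comm => i j; apply: comm_pows.
Qed.

Lemma mpevalM P Q : mpeval (P * Q) h = mpeval P h * mpeval Q h.
Proof.
rewrite !mpeval_mmap.
pose_big_enough i.
  rewrite (mpolywME (k := i)) // raddf_sum /= !(mmapE i) //.
  rewrite big_distrlr /= pair_bigA; apply/eq_bigr=> /=.
  case=> j1 j2 _ /=; rewrite mmapZ mmapX; apply/esym.
  rewrite mmap1_M' /= -scalerAl mul1r.
  by rewrite !mulr_algl -scalerAl -scalerAr scalerA.
by close.
Qed.

Lemma mpevalD P Q : mpeval (P + Q) h = mpeval P h + mpeval Q h.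
Proof. by rewrite !mpeval_mmap mmapD. Qed.

Lemma mpevalN P : mpeval (- P) h = - mpeval P h.
Proof. by rewrite !mpeval_mmap mmapN. Qed.

Lemma mpevalZ c P : mpeval (c *: P) h = c *: mpeval P h.
Proof. by rewrite !mpeval_mmap mmapZ /= mulr_algl. Qed.

Lemma mpevalC c : mpeval c%:MP h = c%:A.
Proof. by rewrite !mpeval_mmap mmapC. Qed.

Lemma mpevalX i : mpeval 'X_i h = h i.
Proof. by rewrite !mpeval_mmap mmapX mmap1U. Qed.

End MP.


Section Pointwise.
Variables (m n : nat) (A : algType Cplx).
Variable (e : 'I_(m + n).+1 -> 'I_(m + n).+1 -> A).
Hypothesis He : gl_rel e.
Local Notation tauN := (tau e).

Lemma Kf0 a : Kf e a 0 = 0.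
Proof.
rewrite /Kf big1 // => p _; rewrite /ww /= mxE eq_sym (negbTE (widen_neq p)).
by rewrite mulr0 scaler0.
Qed.

Lemma tau0 : tauN 0 = 1.
Proof. by rewrite /tau /= mxE eqxx. Qed.

Lemma PW_top (H : A) a i : Kf e a i.+2 - H = (Kf e a.+1 i.+1 - H) + Hh e a * tauN i.+1 - Kf e a i.+1.
Proof. by rewrite (EK He) zS. Qed.

Lemma PW_top0 a : Kf e a 1 = Hh e a.
Proof. by rewrite (EK He) !Kf0 tau0 mulr1 add0r subr0. Qed.

Lemma PW_L3 k : \sum_(a < k.+1) Kf e a (k - a) - (k%:R : Cplx) *: Hh e k.-1
   = \sum_(a < k) (Kf e a (k - a) - Hh e k.-1).
Proof.
rewrite big_ord_recr /= subnn Kf0 addr0 sumrB; congr (_ - _).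
by rewrite sumr_const card_ord scaler_nat.
Qed.

Definition Qv k := tauN k.+1 * tauN 1 + (1 + eps m n) *: tauN k.+1 - Icas e k.+1 -
    \sum_(i < k) Hh e i * tauN (k - i).

Lemma PW_HQ k : Hh e k = Qv k - tauN k.+2.
Proof.
have R := R1 He k.+1; rewrite big_ord_recr /= subnn tau0 mulr1 in R.
exact: zQ R.
Qed.

Lemma PW_step k : (k.+2%:R : Cplx) *: tauN k.+2 =
  (\sum_(a < k.+2) Kf e a (k.+1 - a) - (k.+1%:R : Cplx) *: Hh e k)
  + (k.+1%:R : Cplx) *: Qv k - (Ihat e k.+2 - Icas e k.+2).
Proof.
have ED := EDelta e k.+2; rewrite /= in ED.
set S := \sum_(a < k.+2) _ in ED *.
set c := (k.+1%:R : Cplx).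
have E1 := zT ED; rewrite -[S](subrK (c *: Hh e k)) in E1.
set s := S - c *: Hh e k in E1 *.
rewrite PW_HQ scalerBr in E1.
have E2 := zU E1.
by rewrite scaler_nat mulrSr addrC -scaler_nat -/c E2.
Qed.

Lemma PW_tau1 : tauN 1 = 0 - (Ihat e 1 - Icas e 1).
Proof.
apply: zT; have ED := EDelta e 1; rewrite /= in ED.
by rewrite ED big_ord_recl big_ord0 addr0 Kf0.
Qed.

Lemma PW_sig j : sigma e j = tauN j.+2 - tauN 1 * tauN j.+1 - \sum_(a < j) sigma e a * tauN (j - a).
Proof.
have E := Esig e j.+1; rewrite /= big_ord_recr /= subnn tau0 mulr1 in E.
by rewrite E; apply: zW.
Qed.

End Pointwise.

Section Uniform.
Variables (m n Kmax : nat).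
Definition Fam := forall A : algType Cplx, ('I_(m + n).+1 -> 'I_(m + n).+1 -> A) -> A.
Definition US (F : Fam) := exists P : {mpoly Cplx[Kmax + Kmax]},
  forall (A : algType Cplx) (e : 'I_(m + n).+1 -> 'I_(m + n).+1 -> A),
    gl_rel e -> F A e = mpeval P (@casvars m n A e Kmax).

Lemma US_ext (F G : Fam) : (forall A e, gl_rel e -> F A e = G A e) -> US G -> US F.
Proof. by move=> H [P HP]; exists P => A e He; rewrite H // HP. Qed.

Lemma US0 : US (fun A e => 0).
Proof. by exists 0 => A e He; rewrite -mpolyC0 mpevalC scale0r. Qed.

Lemma US1 : US (fun A e => 1).
Proof. by exists 1 => A e He; rewrite -mpolyC1 mpevalC scale1r. Qed.

Lemma USD (F G : Fam) : US F -> US G -> US (fun A e => F A e + G A e).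
Proof. by move=> [P HP] [Q HQ]; exists (P + Q) => A e He; rewrite mpevalD HP // HQ. Qed.

Lemma USN (F : Fam) : US F -> US (fun A e => - F A e).
Proof. by move=> [P HP]; exists (- P) => A e He; rewrite mpevalN HP. Qed.

Lemma USB (F G : Fam) : US F -> US G -> US (fun A e => F A e - G A e).
Proof. by move=> hF hG; apply: (USD hF); apply: USN. Qed.

Lemma USM (F G : Fam) : US F -> US G -> US (fun A e => F A e * G A e).
Proof.
move=> [P HP] [Q HQ]; exists (P * Q) => A e He.
by rewrite mpevalM ?HP ?HQ //; apply: casvars_comm.
Qed.

Lemma USZ c (F : Fam) : US F -> US (fun A e => c *: F A e).
Proof. by move=> [P HP]; exists (c *: P) => A e He; rewrite mpevalZ HP. Qed.

Lemma US_sum k (F : 'I_k -> Fam) : (forall a, US (F a)) -> US (fun A e => \sum_a F a A e).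
Proof.
elim: k F => [|k IH] F H.
  by apply: (US_ext (G := fun A e => 0)) => [A e _|]; [rewrite big_ord0|exact: US0].
apply: (US_ext (G := fun A e => \sum_(a < k) F (widen_ord (leqnSn k) a) A e + F ord_max A e)).
  by move=> A e _; rewrite big_ord_recr.
by apply: USD; [apply: IH|].
Qed.

Lemma US_Icas j : (j < Kmax)%N -> US (fun A e => Icas e j).
Proof.
move=> hj; exists 'X_(lshift Kmax (Ordinal hj)) => A e He; rewrite mpevalX /casvars.
by rewrite -[lshift _ _]/(unsplit (inl (Ordinal hj))) unsplitK.
Qed.

Lemma US_Ihat j : (j < Kmax)%N -> US (fun A e => Ihat e j).
Proof.
move=> hj; exists 'X_(rshift Kmax (Ordinal hj)) => A e He; rewrite mpevalX /casvars.
by rewrite -[rshift _ _]/(unsplit (inr (Ordinal hj))) unsplitK.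
Qed.

Lemma US_inv k (F : Fam) : US (fun A e => (k.+1%:R : Cplx) *: F A e) -> US F.
Proof.
move=> H; apply: (US_ext (G := fun A e => (k.+1%:R : Cplx)^-1 *: ((k.+1%:R : Cplx) *: F A e))).
  by move=> A e _; rewrite scalerA mulVf ?scale1r // pnatr_eq0.
exact: USZ.
Qed.

Lemma main_tau k : (k < Kmax)%N ->
  (forall j, (j <= k)%N -> US (fun A e => tau e j)) /\
  (forall a, (a.+2 <= k)%N -> US (fun A e => Hh e a)).
Proof.
elim: k => [|k IH] hk.
  split=> [j|a //]; rewrite leqn0 => /eqP ->.
  by apply: (US_ext (G := fun A e => 1)) => [A e _|]; [rewrite tau0|exact: US1].
have [Ht Hh'] := IH (ltnW hk).
have L1 : forall i a, (a + i < k)%N -> US (fun A e => Kf e a i).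
  elim=> [|i IHi] a hai.
    by apply: (US_ext (G := fun A e => 0)) => [A e _|]; [rewrite Kf0|exact: US0].
  apply: (US_ext (G := fun A e => Kf e a.+1 i + Hh e a * tau e i - Kf e a i)).
    by move=> A e He; rewrite (EK He).
  apply: USB; [apply: USD|].
  - by apply: IHi; lia.
  - by apply: USM; [apply: Hh'|apply: Ht]; lia.
  - by apply: IHi; lia.
have L2 : forall i a, (a + i.+1)%N = k -> US (fun A e => Kf e a i.+1 - Hh e k.-1).
  elim=> [|i IHi] a hai.
    have ha : a = k.-1 by lia.
    by apply: (US_ext (G := fun A e => 0)) => [A e He|]; [rewrite PW_top0 // ha subrr|exact: US0].
  apply: (US_ext (G := fun A e => (Kf e a.+1 i.+1 - Hh e k.-1) + Hh e a * tau e i.+1 - Kf e a i.+1)).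
    by move=> A e He; rewrite PW_top.
  apply: USB; [apply: USD|].
  - by apply: IHi; lia.
  - by apply: USM; [apply: Hh'|apply: Ht]; lia.
  - by apply: L1; lia.
have L3 : US (fun A e => \sum_(a < k.+1) Kf e a (k - a) - (k%:R : Cplx) *: Hh e k.-1).
  apply: (US_ext (G := fun A e => \sum_(a < k) (Kf e a (k - a) - Hh e k.-1))).
    by move=> A e He; rewrite PW_L3.
  apply: US_sum => a; have ha := ltn_ord a.
  have -> : (k - a = (k - a).-1.+1)%N by lia.
  by apply: L2; lia.
have hI : US (fun A e => Ihat e k.+1 - Icas e k.+1).
  by apply: USB; [apply: US_Ihat|apply: US_Icas].
case: k hk IH Ht Hh' L1 L2 L3 hI => [|k] hk IH Ht Hh' L1 L2 L3 hI.
  split=> [j|a]; last by lia.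
  rewrite leq_eqVlt ltnS => /orP [/eqP ->|]; last exact: Ht.
  apply: (US_ext (G := fun A e => 0 - (Ihat e 1 - Icas e 1))).
    by move=> A e He; rewrite PW_tau1.
  by apply: USB; [exact: US0|].
have iQ : US (fun A e => Qv e k).
  apply: USB; [apply: USB; [apply: USD|]|].
  - by apply: USM; apply: Ht.
  - by apply: USZ; apply: Ht.
  - by apply: US_Icas; lia.
  - apply: US_sum => a; have ha := ltn_ord a.
    by apply: USM; [apply: Hh'|apply: Ht]; lia.
have it : US (fun A e => tau e k.+2).
  apply: (@US_inv k.+1).
  apply: (US_ext (G := fun A e =>
    (\sum_(a < k.+2) Kf e a (k.+1 - a) - (k.+1%:R : Cplx) *: Hh e k)
     + (k.+1%:R : Cplx) *: Qv e k - (Ihat e k.+2 - Icas e k.+2))).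
    by move=> A e He; rewrite PW_step.
  by apply: USB => //; apply: USD => //; apply: USZ.
split=> [j|a].
  by rewrite leq_eqVlt ltnS => /orP [/eqP ->|] //; apply: Ht.
rewrite leq_eqVlt ltnS => /orP [/eqP [->]|]; last exact: Hh'.
apply: (US_ext (G := fun A e => Qv e k - tau e k.+2)).
  by move=> A e He; rewrite (PW_HQ He).
by apply: USB.
Qed.

Lemma main_sigma l : (l.+2 < Kmax)%N -> US (fun A e => sigma e l).
Proof.
move=> hl; have [Ht _] := main_tau hl.
suff : forall j, (j <= l)%N -> US (fun A e => sigma e j) by apply.
elim/ltn_ind => j IHj hj.
apply: (US_ext (G := fun A e => tau e j.+2 - tau e 1 * tau e j.+1
   - \sum_(a < j) sigma e a * tau e (j - a))).
  by move=> A e He; rewrite PW_sig.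
apply: USB; [apply: USB|].
- by apply: Ht; lia.
- by apply: USM; apply: Ht; lia.
- apply: US_sum => a; have ha := ltn_ord a.
  by apply: USM; [apply: IHj; lia|apply: Ht; lia].
Qed.

End Uniform.

Theorem theorem15 (m n : nat) :
  (forall k : nat, exists P : {mpoly Cplx[k.+1 + k.+1]},
     forall (A : algType Cplx) (e : 'I_(m + n).+1 -> 'I_(m + n).+1 -> A),
       gl_rel e -> tau e k = mpeval P (@casvars m n A e _))
  /\
  (forall l : nat, exists P : {mpoly Cplx[l.+3 + l.+3]},
     forall (A : algType Cplx) (e : 'I_(m + n).+1 -> 'I_(m + n).+1 -> A),
       gl_rel e -> sigma e l = mpeval P (@casvars m n A e _)).
Proof.
split=> [k|l].
  have [Ht _] := @main_tau m n k.+1 k (ltnSn k).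
  exact: Ht.
exact: (@main_sigma m n l.+3 l).
Qed.
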